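(* Fix an association $\kappa$ in which every cell serves at least one UE and every UE is served by at least one cell, a power vector $\bm{p}\in\mathbb{R}^n_{>0}$ and a demand vector $\bm{d}\in\mathbb{R}^m_{>0}$. For a noise power $\sigma^2>0$ and a load vector $\bm{x}\in\mathbb{R}^n_{\ge 0}$, define $\bm{F}(\sigma^2,\bm{x})\in\mathbb{R}^n$ by $$F_i(\sigma^2,\bm{x})=\sum_{j\in\mathcal{J}_i}\frac{d_j}{MB\log_2\!\big(1+\gamma_j(\sigma^2,\bm{x})\big)},\qquad \gamma_j(\sigma^2,\bm{x})=\frac{\sum_{i'\in\mathcal{I}_j}p_{i'}g_{i'j}}{\sum_{k\in\mathcal{I}\setminus\mathcal{I}_j}p_kg_{kj}x_k+\sigma^2}.$$ Then $\bm{F}$ is scalable jointly in $(\sigma^2,\bm{x})$: for every $\sigma^2>0$, every $\bm{x}\in\mathbb{R}^n_{\ge0}$ and every $\alpha>1$, $$\alpha\,F_i(\sigma^2,\bm{x})>F_i(\alpha\sigma^2,\alpha\bm{x})\quad\text{for all } i\in\mathcal{I}.$$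
   Context: Cellular network model. $\mathcal{I}$ is a finite set of $n$ cells and $\mathcal{J}$ a finite set of $m$ user equipments (UEs). An association is a matrix $\kappa\in\{0,1\}^{n\times m}$. It determines $\mathcal{I}_j=\{i:\kappa_{ij}=1\}$, the set of cells serving UE $j$, and $\mathcal{J}_i=\{j:\kappa_{ij}=1\}$, the set of UEs served by cell $i$. $M>0$ is the number of resource units and $B>0$ the bandwidth per resource unit. The channel gains satisfy $g_{ij}>0$. The standing assumption that every cell serves at least one UE makes the load function positive, as the paper requires. *)

(* Defs.v *)
From HB Require Import structures.
From mathcomp Require Import all_boot all_order all_algebra.
From mathcomp Require Import all_classical all_reals all_analysis.
Set Implicit Arguments. Unset Strict Implicit. Unset Printing Implicit Defensive.
Import Order.TTheory GRing.Theory Num.Theory.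
Local Open Scope ring_scope.

Definition log2 {R : realType} (y : R) : R := ln y / ln 2.

(* association kappa : cells 'I_n x UEs 'I_m -> bool  (kappa i j = kappa_ij = 1) *)

Definition sinr {R : realType} {n m : nat} (kappa : 'I_n -> 'I_m -> bool)
  (p : 'I_n -> R) (g : 'I_n -> 'I_m -> R) (sigma2 : R) (x : 'I_n -> R) (j : 'I_m) : R :=
  (\sum_(i' < n | kappa i' j) p i' * g i' j) /
  (\sum_(k < n | ~~ kappa k j) p k * g k j * x k + sigma2).

Definition loadF {R : realType} {n m : nat} (kappa : 'I_n -> 'I_m -> bool)
  (M B : R) (p : 'I_n -> R) (g : 'I_n -> 'I_m -> R) (d : 'I_m -> R)
  (sigma2 : R) (x : 'I_n -> R) (i : 'I_n) : R :=
  \sum_(j < m | kappa i j) d j / (M * B * log2 (1 + sinr kappa p g sigma2 x j)).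

(* Main.v *)
Require Import Defs.
From mathcomp Require Import all_boot all_order all_algebra.
From mathcomp Require Import all_classical all_reals all_analysis.
From mathcomp Require Import ring lra.
Import Order.TTheory GRing.Theory Num.Theory.
Local Open Scope ring_scope.

Lemma ln_lt_sub1 (R : realType) (z : R) : 0 < z -> z != 1 -> ln z < z - 1.
Proof.
move=> z0 z1.
have h : ln z != 0 by rewrite ln_eq0.
have := expR_gt1Dx h; rewrite lnK ?posrE //.
by rewrite ltrBrDl.
Qed.

Lemma key (R : realType) (y a : R) : 0 < y -> 1 < a ->
  ln (1 + y) < a * ln (1 + y / a).
Proof.
move=> y0 a1.
have a0 : 0 < a by apply: lt_trans a1.
set u := y / a.
have u0 : 0 < u by rewrite /u divr_gt0.
have u1 : 0 < 1 + u by rewrite addr_gt0.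
have yu : y = a * u by rewrite /u mulrC divfK // gt_eqF.
have h1 : u / (1 + u) < ln (1 + u).
  have w0 : 0 < (1 + u)^-1 by rewrite invr_gt0.
  have w1 : (1 + u)^-1 != 1.
    by rewrite lt_eqF // invf_lt1 // ltrDl.
  have := @ln_lt_sub1 _ _ w0 w1; rewrite lnV ?posrE //.
  have -> : (1 + u)^-1 - 1 = - (u / (1 + u)).
    by field; rewrite gt_eqF.
  by rewrite ltrN2.
set z := (1 + y) / (1 + u).
have z0 : 0 < z by rewrite /z divr_gt0 // addr_gt0.
have h2 : ln z <= (a - 1) * (u / (1 + u)).
  have zz : z = 1 + (z - 1) by rewrite addrC subrK.
  have := @le_ln1Dx R (z - 1); rewrite -zz => H.
  apply: le_trans (H _) _.
    by lra.
  rewrite /z yu le_eqVlt; apply/orP; left; apply/eqP.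
  by field; rewrite gt_eqF.
have h3 : ln (1 + y) = ln z + ln (1 + u).
  by rewrite -lnM ?posrE // /z divfK // gt_eqF.
rewrite h3.
have a10 : 0 < a - 1 by rewrite subr_gt0.
have : (a - 1) * (u / (1 + u)) < (a - 1) * ln (1 + u) by rewrite ltr_pM2l.
move: h2; set L := ln (1 + u); set q := u / (1+u); set lz := ln z.
move=> h2 h4.
have -> : a * L = (a - 1) * L + L by ring.
by rewrite ltrD2r; apply: le_lt_trans h4.
Qed.

Theorem proposition2 (R : realType) (n m : nat)
  (kappa : 'I_n -> 'I_m -> bool) (M B : R) (g : 'I_n -> 'I_m -> R)
  (p : 'I_n -> R) (d : 'I_m -> R)
  (hM : 0 < M) (hB : 0 < B) (hg : forall i j, 0 < g i j)
  (hcell : forall i : 'I_n, exists j : 'I_m, kappa i j)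
  (hue : forall j : 'I_m, exists i : 'I_n, kappa i j)
  (hp : forall i, 0 < p i) (hd : forall j, 0 < d j) :
  forall (sigma2 : R) (x : 'I_n -> R) (alpha : R),
    0 < sigma2 -> (forall k, 0 <= x k) -> 1 < alpha ->
    forall i : 'I_n,
      loadF kappa M B p g d (alpha * sigma2) (fun k => alpha * x k) i
      < alpha * loadF kappa M B p g d sigma2 x i.
Proof.
move=> s x a s0 x0 a1 i.
have a0 : 0 < a by apply: lt_trans a1.
rewrite /loadF mulr_sumr.
have [j0 hj0] := hcell i.
apply: ltr_sum; first by apply/hasP; exists j0 => //; rewrite mem_index_enum.
move=> j _.
set S := \sum_(i' < n | kappa i' j) p i' * g i' j.
set I := \sum_(k < n | ~~ kappa k j) p k * g k j * x k.
have S0 : 0 < S.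
  have [i1 hi1] := hue j.
  have := @ltr_sum R _ (index_enum 'I_n) (fun i' => kappa i' j) (fun _ => 0)
    (fun i' => p i' * g i' j).
  rewrite big1_eq; apply.
    by apply/hasP; exists i1 => //; rewrite mem_index_enum.
  by move=> k _; rewrite mulr_gt0.
have I0 : 0 <= I by apply: sumr_ge0 => k _; rewrite mulr_ge0 // mulr_ge0 // ltW.
have D0 : 0 < I + s by rewrite ltr_wpDl.
have E1 : sinr kappa p g s x j = S / (I + s) by [].
have E2 : sinr kappa p g (a * s) (fun k => a * x k) j = (S / (I + s)) / a.
  rewrite /sinr -/S.
  have -> : \sum_(k < n | ~~ kappa k j) p k * g k j * (a * x k) = a * I.
    by rewrite /I mulr_sumr; apply: eq_bigr => k _; ring.
  by field; rewrite -mulrDr !gt_eqF // mulr_gt0.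
rewrite E1 E2.
set y := S / (I + s).
have y0 : 0 < y by rewrite divr_gt0.
have K := @key R y a y0 a1.
have l2 : 0 < ln (2 : R) by rewrite ln_gt0 // ltr1n.
have L1 : 0 < ln (1 + y) by rewrite ln_gt0 // ltrDl.
have MB : 0 < M * B by rewrite mulr_gt0.
rewrite /log2.
have La : 0 < ln (1 + y / a) by rewrite ln_gt0 // ltrDl divr_gt0.
set L := ln (1 + y) in K L1 *.
set L' := ln (1 + y / a) in K La *.
rewrite -subr_gt0.
have -> : a * (d j / (M * B * (L / ln 2))) - d j / (M * B * (L' / ln 2))
  = (d j * ln 2 / (M * B)) * ((a * L' - L) / (L * L')).
  by field; rewrite !gt_eqF.
rewrite mulr_gt0 // ?divr_gt0 ?mulr_gt0 //.
by rewrite subr_gt0.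
Qed.
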